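(* Let $m$ be a positive integer. If $D$ is a quaternary extremal Hermitian self-dual code of length $6m$, then $B_{2i}\equiv 0 \pmod 9$ for every $i=m+1,m+2,\ldots,3m$, where $B_{j}$ denotes the number of codewords of weight $j$ in $D$.
   Context: Let $\mathbb{F}_4=\{0,1,\omega,\omega^2\}$ with $\omega^2=\omega+1$. A quaternary code of length $n$ is a linear subspace of $\mathbb{F}_4^n$; it is Hermitian self-dual if it equals its dual with respect to $\langle x,y\rangle_H=\sum_k x_k y_k^2$. The weight of a vector is the number of its nonzero coordinates. A quaternary Hermitian self-dual code of length $n$ is extremal if its minimum (nonzero) weight equals $2\lfloor n/6\rfloor+2$; for length $6m$ this is $2m+2$. *)

(* Defs.v *)
From HB Require Import structures.
From mathcomp Require Import all_boot all_order all_algebra all_field.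
Set Implicit Arguments. Unset Strict Implicit. Unset Printing Implicit Defensive.
Import GRing.Theory.
Local Open Scope ring_scope.

(* Quaternary codes: F is a finite field with #|F| = 4 (i.e. F_4, unique up to
   isomorphism). A linear code of length n is a subspace of 'rV[F]_n. *)

Definition wt (F : finFieldType) (n : nat) (x : 'rV[F]_n) : nat :=
  #|[set k : 'I_n | x 0 k != 0]|.

Definition herm (F : finFieldType) (n : nat) (x y : 'rV[F]_n) : F :=
  \sum_(k < n) x 0 k * (y 0 k) ^+ 2.

Definition herm_self_dual (F : finFieldType) (n : nat) (D : {vspace 'rV[F]_n}) : Prop :=
  forall y : 'rV[F]_n, (y \in D) <-> (forall x : 'rV[F]_n, x \in D -> herm x y = 0).

Definition min_weight (F : finFieldType) (n : nat) (D : {vspace 'rV[F]_n}) (d : nat) : Prop :=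
  (exists2 x : 'rV[F]_n, (x \in D) && (x != 0) & wt x = d) /\
  (forall x : 'rV[F]_n, x \in D -> x != 0 -> (d <= wt x)%N).

Definition extremal (F : finFieldType) (n : nat) (D : {vspace 'rV[F]_n}) : Prop :=
  min_weight D (2 * (n %/ 6) + 2)%N.

Definition wdist (F : finFieldType) (n : nat) (D : {vspace 'rV[F]_n}) (j : nat) : nat :=
  #|[set x : 'rV[F]_n | (x \in D) && (wt x == j)]|.

(* Main.v *)
Require Import Defs.
From mathcomp Require Import all_boot all_order all_algebra all_field.
From mathcomp Require Import ring zify.
Set Warnings "-all".
Set Implicit Arguments. Unset Strict Implicit. Unset Printing Implicit Defensive.
Import GRing.Theory Num.Theory.
Local Open Scope ring_scope.

Section Chi.
Variable F : finFieldType.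
Hypothesis F4 : #|F| = 4%N.

Lemma char2F : (2%:R : F) = 0.
Proof.
apply: pcharf0; apply: (@card_finPcharP _ 2 2) => //.
Qed.

Lemma addxx (a : F) : a + a = 0.
Proof. by rewrite -mulr2n -mulr_natr char2F mulr0. Qed.

Lemma oppF (a : F) : - a = a.
Proof. by apply/eqP; rewrite eq_sym -subr_eq0 opprK addxx. Qed.

Lemma sqrDF (a b : F) : (a + b) ^+ 2 = a ^+ 2 + b ^+ 2.
Proof. by rewrite sqrrD -mulr_natr char2F mulr0 addr0. Qed.

Lemma frob4 (a : F) : a ^+ 4 = a.
Proof. by rewrite -F4 expf_card. Qed.

Definition trF (a : F) := a + a ^+ 2.

Lemma trD a b : trF (a + b) = trF a + trF b.
Proof. by rewrite /trF sqrDF addrACA. Qed.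

Lemma tr01 a : trF a = 0 \/ trF a = 1.
Proof.
have h : trF a ^+ 2 = trF a.
  by rewrite /trF sqrDF -exprM frob4 addrC.
have : trF a * (trF a - 1) == 0 by rewrite mulrBr mulr1 -expr2 h subrr.
by rewrite mulf_eq0 subr_eq0 => /orP [/eqP -> | /eqP ->]; [left|right].
Qed.

Definition chi (a : F) : int := if trF a == 0 then 1 else -1.

Lemma chi0 : chi 0 = 1.
Proof. by rewrite /chi /trF expr0n /= addr0 eqxx. Qed.

Lemma chiD a b : chi (a + b) = chi a * chi b.
Proof.
rewrite /chi trD.
have h1 : (1 : F) != 0 by exact: oner_neq0.
case: (tr01 a) => ->; case: (tr01 b) => ->;
  rewrite ?addr0 ?add0r ?eqxx ?addxx ?(negbTE h1) //.
by rewrite eqxx mulrNN mulr1.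
Qed.

Lemma exists_chiN : exists a0, chi a0 = -1.
Proof.
case: (boolP [forall a, trF a == 0]) => [/forallP H | ]; last first.
  by case/forallPn => a0 Ha; exists a0; rewrite /chi (negbTE Ha).
exfalso.
have sub : [set: F] \subset [set 0; 1].
  apply/subsetP => a _; rewrite !inE.
  have : a * (a - 1) == 0.
    have := H a; rewrite /trF addr_eq0 oppF => /eqP ha.
    by rewrite mulrBr mulr1 -expr2 -ha subrr.
  by rewrite mulf_eq0 subr_eq0.
have := subset_leq_card sub; rewrite cardsT F4 cards2.
by case: (0 != 1).
Qed.

Lemma sum_chi (c : F) : c != 0 -> \sum_a chi (c * a) = 0.
Proof.
move=> c0; case: exists_chiN => a0 ha0.
set S := \sum_a _.
have e : S = - S.
  rewrite {1}/S (reindex_inj (addIr (a0 / c))) /= /S -sumrN; apply: eq_bigr => a _.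
  rewrite mulrDr mulrCA divff // mulr1 chiD ha0.
  by rewrite mulrN1.
have : S + S = 0 by rewrite {1}e addNr.
by move/eqP; rewrite -mulr2n mulrn_eq0 /= => /eqP.
Qed.

Lemma sqrF_inj : injective (fun a : F => a ^+ 2).
Proof. by move=> a b /= h; rewrite -(frob4 a) -(frob4 b) (exprM _ 2 2) h -exprM. Qed.

Lemma sum_chi_sq (c : F) : c != 0 -> \sum_a chi (c * a ^+ 2) = 0.
Proof.
move=> c0; have := sum_chi c0.
by rewrite (reindex_inj sqrF_inj).
Qed.

End Chi.

Lemma sum_cond_const (R : nmodType) (T : finType) (P : pred T) (c : R) :
  \sum_(i | P i) c = c *+ #|[set i | P i]|.
Proof. by rewrite -sumr_const; apply: eq_bigl => i; rewrite inE. Qed.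

Lemma prod_cond_const (R : comPzRingType) (T : finType) (P : pred T) (c : R) :
  \prod_(i | P i) c = c ^+ #|[set i | P i]|.
Proof. by rewrite -prodr_const; apply: eq_bigl => i; rewrite inE. Qed.

Section MW.
Variables (F : finFieldType) (n : nat) (D : {vspace 'rV[F]_n}).
Hypothesis F4 : #|F| = 4%N.
Hypothesis hsd : herm_self_dual D.

Definition P1 : {poly int} := 1 + 'X *+ 3.
Definition P2 : {poly int} := 1 - 'X.

Lemma hermDl (x y u : 'rV[F]_n) : herm (x + y) u = herm x u + herm y u.
Proof. by rewrite /herm -big_split; apply: eq_bigr => k _; rewrite mxE mulrDl. Qed.

Lemma hermZl t (x u : 'rV[F]_n) : herm (t *: x) u = t * herm x u.
Proof. by rewrite /herm mulr_sumr; apply: eq_bigr => k _; rewrite mxE mulrA. Qed.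

Lemma memDr (x v : 'rV[F]_n) : v \in D -> (x + v \in D) = (x \in D).
Proof.
move=> vD; apply/idP/idP => h; last exact: memvD.
by have := memvB h vD; rewrite addrK.
Qed.

Lemma inner (u : 'rV[F]_n) :
  \sum_(x in D) chi (herm x u) = if u \in D then (#|D|)%:R else 0.
Proof.
case: ifP => uD.
  rewrite -sumr_const; apply: eq_bigr => x xD.
  by rewrite ((hsd u).1 uD x xD) chi0.
have : ~~ [forall x, (x \in D) ==> (herm x u == 0)].
  apply/negP => /forallP H; move/negP: uD; apply; apply/(hsd u).2 => x xD.
  exact/eqP/(implyP (H x)).
case/forallPn => x0; rewrite negb_imply => /andP [x0D hx0].
case: (exists_chiN F4) => a0 ha0.
set S := \sum_(x in D) _.
have e : S = - S.
  rewrite {1}/S (reindex_inj (addIr ((a0 / herm x0 u) *: x0))) /= /S -sumrN.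
  apply: eq_big => x; first by rewrite memDr // memvZ.
  move=> _; rewrite hermDl hermZl mulrAC -mulrA divff // mulr1 chiD // ha0.
  by rewrite mulrN1.
have : S + S = 0 by rewrite {1}e addNr.
by move/eqP; rewrite -mulr2n mulrn_eq0 /= => /eqP.
Qed.

Lemma Xwt (u : 'rV[F]_n) :
  'X^(wt u) = \prod_k (if u 0 k != 0 then 'X else 1) :> {poly int}.
Proof.
by rewrite /wt -prodr_const big_mkcond /=; apply: eq_bigr => k _; rewrite inE.
Qed.

Lemma chi_herm (x u : 'rV[F]_n) :
  chi (herm x u) = \prod_k chi (x 0 k * u 0 k ^+ 2).
Proof. by rewrite /herm (big_morph (@chi F) (chiD F4) (chi0 F)). Qed.

Lemma coord_sum (b : F) :
  \sum_a (chi (b * a ^+ 2))%:P * (if a != 0 then 'X else 1)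
  = if b == 0 then P1 else P2.
Proof.
rewrite (bigD1 0) //= eqxx expr0n /= mulr0 chi0 mulr1.
under eq_bigr => a ha do rewrite ha.
rewrite -mulr_suml -rmorph_sum.
case: eqP => [-> | /eqP b0].
  under eq_bigr do rewrite mul0r chi0.
  rewrite sum_cond_const.
  have -> : #|[set i : F | i != 0]| = 3%N.
    rewrite -[3%N]/(4.-1) -F4 -(cardsC1 (0:F)); apply: eq_card => i; by rewrite !inE.
  rewrite /P1 polyC1 mulrC -[in RHS]mulr_natr; congr (1 + 'X * _); exact: (rmorph_nat (@polyC int) 3).
have := sum_chi_sq F4 b0; rewrite (bigD1 0) //= expr0n /= mulr0 chi0 => h.
have -> : \sum_(i | i != 0) chi (b * i ^+ 2) = -1.
  by apply/eqP; rewrite -addr_eq0 addrC h.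
by rewrite /P2 polyCN mulN1r.
Qed.

Lemma prod_split (x : 'rV[F]_n) :
  \prod_k (if x 0 k == 0 then P1 else P2) = P1 ^+ (n - wt x) * P2 ^+ (wt x).
Proof.
rewrite (bigID (fun k => x 0 k == 0)) /=.
rewrite (eq_bigr (fun _ => P1)); last by move=> k ->.
rewrite [X in _ * X](eq_bigr (fun _ => P2)); last by move=> k /negbTE ->.
rewrite !prod_cond_const; congr (_ ^+ _ * _ ^+ _).
rewrite cardsCs card_ord /wt; congr (_ - _)%N.
by apply: eq_card => k; rewrite !inE.
Qed.

Lemma factor (x : 'rV[F]_n) :
  \sum_u (chi (herm x u))%:P * 'X^(wt u) = P1 ^+ (n - wt x) * P2 ^+ (wt x).
Proof.
rewrite -prod_split.
under eq_bigr => k _ do rewrite -coord_sum.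
rewrite bigA_distr_bigA /=.
rewrite [RHS](reindex (fun u : 'rV[F]_n => [ffun k => u 0 k])) /=; last first.
  exists (fun f : {ffun 'I_n -> F} => \row_k f k) => [u _ | f _].
    by apply/rowP => k; rewrite mxE ffunE.
  by apply/ffunP => k; rewrite ffunE mxE.
apply: eq_bigr => u _.
rewrite chi_herm Xwt rmorph_prod -big_split /=; apply: eq_bigr => k _.
by rewrite ffunE.
Qed.

Lemma macw :
  \sum_(x in D) P1 ^+ (n - wt x) * P2 ^+ (wt x)
  = (#|D|)%:R * \sum_(u in D) 'X^(wt u).
Proof.
under eq_bigr => x _ do rewrite -factor.
rewrite exchange_big /=.
under eq_bigr => u _ do rewrite -mulr_suml -rmorph_sum inner.
rewrite mulr_sumr [RHS]big_mkcond; apply: eq_bigr => u _.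
by case: ifP => _; rewrite ?rmorph_nat ?mul0r ?mulr0.
Qed.

Lemma sum_wt (R : pzRingType) (G : nat -> R) :
  \sum_(x in D) G (wt x) = \sum_(j < n.+1) (wdist D j)%:R * G j.
Proof.
have wtle (x : 'rV[F]_n) : (wt x < n.+1)%N.
  rewrite ltnS /wt; have := max_card (mem [set k : 'I_n | x 0 k != 0]); by rewrite card_ord.
rewrite (partition_big (fun x => Ordinal (wtle x)) xpredT) //=.
apply: eq_bigr => j _.
rewrite (eq_bigr (fun _ => G j)); last by move=> x /andP [_ /eqP <-].
rewrite sum_cond_const /wdist mulr_natl; congr (_ *+ _).
Qed.

End MW.

Lemma comp_exp (R : comNzRingType) (p q : {poly R}) k :
  (p ^+ k) \Po q = (p \Po q) ^+ k.
Proof.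
elim: k => [|k IH]; first by rewrite !expr0 -polyC1 comp_polyC.
by rewrite !exprS comp_polyM IH.
Qed.

Lemma key (K : fieldType) (p : {poly K}) (k : nat) :
  (2%:R : K) != 0 -> p \Po (1 - 'X) = p -> p \Po (- 'X) = p ->
  'X^k %| p -> (size p <= 3 * k)%N -> p = 0.
Proof.
move=> h2 h1 hN /dvdpP [q hq] hs.
set A := ('X - 0%:P) ^+ k : {poly K}.
set B := ('X - 1%:P) ^+ k : {poly K}.
set C := ('X - (-1)%:P) ^+ k : {poly K}.
have hA : A %| p by rewrite hq /A subr0 dvdp_mulIr.
have e1 : (1 - 'X) ^+ k = ((-1) ^+ k : K) *: B :> {poly K}.
  have -> : 1 - 'X = (-1 : K) *: ('X - 1%:P) :> {poly K} by rewrite polyC1 scaleN1r opprB.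
  by rewrite exprZn.
have e2 : B \Po (- 'X) = ((-1) ^+ k : K) *: C.
  rewrite /B comp_exp comp_polyB comp_polyX comp_polyC.
  have -> : - 'X - 1%:P = (-1 : K) *: ('X - (-1)%:P) :> {poly K}.
    by rewrite polyCN opprK scaleN1r opprD.
  by rewrite exprZn.
have eB : p = (q \Po (1 - 'X)) * (((-1) ^+ k : K) *: B).
  by rewrite -{1}h1 {1}hq comp_polyM comp_Xn_poly e1.
have hB : B %| p by rewrite eB -scalerAr scalerAl dvdp_mulIr.
have eC : p = ((q \Po (1 - 'X)) \Po (- 'X)) * (((-1) ^+ k : K) *: (((-1) ^+ k : K) *: C)).
  by rewrite -{1}hN {1}eB comp_polyM comp_polyZ e2.
have hC : C %| p by rewrite eC -!scalerAr !scalerAl dvdp_mulIr.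
have n1 : (-1 : K) != 0 by rewrite oppr_eq0 oner_neq0.
have n2 : (-1 - 1 : K) != 0 by rewrite -opprD oppr_eq0.
have cAB : coprimep A B.
  by apply: coprimep_expl; apply: coprimep_expr; apply: coprimep_XsubC2;
    rewrite subr0 oner_neq0.
have cABC : coprimep (A * B) C.
  rewrite coprimepMl; apply/andP; split; apply: coprimep_expl;
    apply: coprimep_expr; apply: coprimep_XsubC2; by rewrite ?subr0.
have hABC : A * B * C %| p by rewrite Gauss_dvdp // Gauss_dvdp // hA hB hC.
apply/eqP; apply/negPn/negP => p0.
have := dvdp_leq p0 hABC.
have sA : size A = k.+1 by rewrite size_exp_XsubC.
have sB : size B = k.+1 by rewrite size_exp_XsubC.
have sC : size C = k.+1 by rewrite size_exp_XsubC.
have nz (x : {poly K}) : size x = k.+1 -> x != 0.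
  by move=> h; rewrite -size_poly_eq0 h.
rewrite size_mul ?mulf_neq0 ?nz // size_mul ?nz // sA sB sC.
move=> h; have := leq_trans h hs; rewrite -!addSnnS !addSn /= ltnNge.
by rewrite !mulSn mul0n addn0 addnA leqnn.
Qed.

Definition Pc (n : nat) (c : nat -> int) : {poly int} := \poly_(j < n.+1) c j.
Definition Tc (n : nat) (c : nat -> int) : {poly int} :=
  \sum_(j < n.+1) c j *: (P1 ^+ (n - j) * P2 ^+ j).

Definition phi (z : int) : 'F_3 := z%:~R.

Lemma three0 : (3%:R : 'F_3) = 0.
Proof. by apply/eqP; vm_compute. Qed.

Lemma map_Pc n c :
  map_poly (intr : int -> 'F_3) (Pc n c) = \poly_(j < n.+1) (c j)%:~R.
Proof.
apply/polyP => i; rewrite coef_map !coef_poly /=.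
by case: ifP => //; rewrite rmorph0.
Qed.

Lemma map_P1 : map_poly (intr : int -> 'F_3) P1 = 1.
Proof.
rewrite /P1 rmorphD rmorph1 rmorphMn /= map_polyX -mulr_natr.
by rewrite -(rmorph_nat (@polyC 'F_3)) three0 mulr0 addr0.
Qed.

Lemma map_P2 : map_poly (intr : int -> 'F_3) P2 = 1 - 'X.
Proof. by rewrite /P2 rmorphB rmorph1 /= map_polyX. Qed.

Lemma map_Tc n c :
  map_poly (intr : int -> 'F_3) (Tc n c)
  = (map_poly (intr : int -> 'F_3) (Pc n c)) \Po (1 - 'X).
Proof.
rewrite map_Pc poly_def /Tc rmorph_sum raddf_sum; apply: eq_bigr => j _.
rewrite /= map_polyZ rmorphM !rmorphXn /= map_P1 map_P2 expr1n mul1r.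
by rewrite comp_polyZ comp_Xn_poly.
Qed.

Lemma F3_dvd (z : int) : (z%:~R : 'F_3) = 0 -> (3 %| z)%Z.
Proof.
move=> h; apply/dvdz_mod0P.
have ge0 : 0 <= (z %% 3)%Z by apply: modz_ge0.
have lt3 : (z %% 3)%Z < 3 by apply: ltz_pmod.
move: h; rewrite {1}(divz_eq z 3) rmorphD rmorphM /=.
have -> : ((3 : int)%:~R : 'F_3) = 0 by apply/eqP; vm_compute.
rewrite mulr0 add0r.
move: ge0 lt3; case: (z %% 3)%Z => [[|[|[|r]]]|r] //= _ _ h.
Qed.

Lemma step (m : nat) (c : nat -> int) :
  (forall j, odd j -> c j = 0) -> (forall j, (j < 2 * m + 2)%N -> c j = 0) ->
  (map_poly (intr : int -> 'F_3) (Pc (6 * m) c)) \Po (1 - 'X)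
    = map_poly (intr : int -> 'F_3) (Pc (6 * m) c) ->
  forall j, (j <= 6 * m)%N -> (3 %| c j)%Z.
Proof.
move=> hodd hlow hinv j hj.
set p := map_poly _ _ in hinv.
have hp : p = \sum_(j < (6 * m).+1) ((c j)%:~R : 'F_3) *: 'X^j by rewrite /p map_Pc poly_def.
have p0 : p = 0.
  apply: (key (k := (2 * m + 2)%N)) => //.
  - rewrite hp raddf_sum; apply: eq_bigr => i _.
    rewrite /= comp_polyZ comp_Xn_poly.
    case: (boolP (odd i)) => oi; first by rewrite hodd // rmorph0 !scale0r.
    by rewrite exprNn -signr_odd (negbTE oi) expr0 mul1r.
  - have -> : p = (\sum_(i < (6 * m).+1) ((c i)%:~R : 'F_3) *: 'X^(i - (2 * m + 2))) * 'X^(2 * m + 2).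
      rewrite hp mulr_suml; apply: eq_bigr => i _.
      case: (ltnP i (2 * m + 2)) => hi; first by rewrite hlow // rmorph0 !scale0r mul0r.
      by rewrite -scalerAl -exprD subnK.
    exact: dvdp_mulIr.
  - rewrite /p map_Pc; apply: leq_trans (size_poly _ _) _; lia.
have := congr1 (fun q : {poly 'F_3} => q`_j) p0.
rewrite /p coef_map coef_poly ltnS hj coef0 => /= h.
exact: F3_dvd.
Qed.

Lemma Pc_ext n f g : (forall j, (j <= n)%N -> f j = g j) -> Pc n f = Pc n g.
Proof.
move=> h; apply/polyP => i; rewrite !coef_poly; case: ifP => // hi.
by rewrite h // -ltnS.
Qed.

Lemma PcD n f g : Pc n (fun j => f j + g j) = Pc n f + Pc n g.
Proof.
apply/polyP => i; rewrite coefD !coef_poly; case: ifP => //; by rewrite addr0.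
Qed.

Lemma PcZ n a f : Pc n (fun j => a * f j) = a *: Pc n f.
Proof.
apply/polyP => i; rewrite coefZ !coef_poly; case: ifP => //; by rewrite mulr0.
Qed.

Lemma Pc_delta n : Pc n (fun j => (j == 0%N)%:R) = 1.
Proof.
apply/polyP => i; rewrite coef1 !coef_poly; case: ifP => //.
by case: i => [|i].
Qed.

Lemma Tc_ext n f g : (forall j, (j <= n)%N -> f j = g j) -> Tc n f = Tc n g.
Proof.
move=> h; apply: eq_bigr => j _; by rewrite h // -ltnS.
Qed.

Lemma TcD n f g : Tc n (fun j => f j + g j) = Tc n f + Tc n g.
Proof. by rewrite /Tc -big_split; apply: eq_bigr => j _; rewrite scalerDl. Qed.

Lemma TcZ n a f : Tc n (fun j => a * f j) = a *: Tc n f.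
Proof. by rewrite /Tc scaler_sumr; apply: eq_bigr => j _; rewrite scalerA. Qed.

Lemma Tc_delta n : Tc n (fun j => (j == 0%N)%:R) = P1 ^+ n.
Proof.
rewrite /Tc big_ord_recl /= scale1r subn0 expr0 mulr1 big1 ?addr0 //.
by move=> i _; rewrite scale0r.
Qed.

Lemma pow9 (R : comNzRingType) (x : R) :
  (exists y, x = 1 + 9%:R * y) -> forall N, exists z, x ^+ N = 1 + 9%:R * z.
Proof.
case=> y -> ; elim=> [|N [z IH]]; first by exists 0; rewrite expr0 mulr0 addr0.
by exists (y + z + 9%:R * y * z); rewrite exprS IH; ring.
Qed.

Lemma core (m : nat) (b : nat -> int) (d : int) :
  b 0%N = 1 -> (forall j, (0 < j < 2 * m + 2)%N -> b j = 0) ->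
  (forall j, odd j -> b j = 0) ->
  d = 2 ^+ (6 * m) -> d *: Pc (6 * m) b = Tc (6 * m) b ->
  forall j, (0 < j <= 6 * m)%N -> (9 %| b j)%Z.
Proof.
move=> b0 hlow hodd hd hmw.
have phid : (d%:~R : 'F_3) = 1.
  rewrite hd rmorphXn /= exprM.
  have -> : ((2 : int)%:~R : 'F_3) ^+ 6 = 1 by apply/eqP; vm_compute.
  by rewrite expr1n.
pose c1 j := if j == 0%N then 0 else b j.
have eb j : (j <= 6 * m)%N -> b j = (j == 0%N)%:R + c1 j.
  by move=> _; rewrite /c1; case: (j =P 0%N) => [->|_]; rewrite ?b0 ?addr0 ?add0r.
have h1 := congr1 (map_poly (intr : int -> 'F_3)) hmw.
rewrite (Pc_ext eb) (Tc_ext eb) PcD TcD Pc_delta Tc_delta in h1.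
rewrite /= map_polyZ /= phid scale1r !rmorphD rmorph1 /= rmorphXn /= map_P1 expr1n in h1.
rewrite map_Tc in h1; move/addrI: h1 => h1.
have d1 := step (c := c1) _ _ (esym h1).
have d1' : forall j, (0 < j <= 6 * m)%N -> (3 %| b j)%Z.
  move=> j /andP [j0 jn]; have := d1 _ _ _ jn; rewrite /c1.
  rewrite (negbTE (lt0n_neq0 j0)); apply.
  - by move=> i oi; rewrite /c1; case: ifP => // _; apply: hodd.
  - move=> i hi; rewrite /c1; case: ifP => // /negbT i0; apply: hlow.
    by rewrite lt0n i0.
pose c2 j := (b j %/ 3)%Z.
have c20 : c2 0%N = 0 by rewrite /c2 b0.
have eb2 j : (j <= 6 * m)%N -> b j = (j == 0%N)%:R + 3 * c2 j.
  move=> jn; case: (j =P 0%N) => [->|/eqP j0]; first by rewrite c20 b0 mulr0 addr0.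
  by rewrite add0r /c2 mulrC divzK // d1' // lt0n j0.
rewrite (Pc_ext eb2) (Tc_ext eb2) PcD TcD Pc_delta Tc_delta PcZ TcZ in hmw.
set A := Pc (6 * m) c2 in hmw *; set T := Tc (6 * m) c2 in hmw *.
have [e he] : exists e, d = 1 + 9%:R * e.
  rewrite hd exprM; apply: pow9; exists 7; by [].
have [Q hQ] : exists Q, P1 ^+ (6 * m) = 1 + 9%:R * Q.
  rewrite (_ : (6 * m)%N = (3 * (2 * m))%N); last by rewrite mulnA.
  rewrite exprM; apply: pow9.
  exists ('X + 3%:R * 'X ^+ 2 + 3%:R * 'X ^+ 3); rewrite /P1; ring.
have h3 : (3 : int)%:P = 3%:R by rewrite -(rmorph_nat (@polyC int)).
have hdP : d%:P = 1 + 9%:R * e%:P.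
  by rewrite he rmorphD rmorphM /= rmorph1 rmorph_nat.
rewrite -!mul_polyC h3 in hmw.
have kk : 3%:R * (A - T - 3%:R * (Q - e%:P - 3%:R * e%:P * A))
    = d%:P * (1 + 3%:R * A) - (P1 ^+ (6 * m) + 3%:R * T).
  by rewrite hdP hQ; ring.
rewrite hmw subrr in kk.
have n3 : (3%:R : {poly int}) != 0.
  by rewrite -(rmorph_nat (@polyC int)) polyC_eq0.
move/eqP: kk; rewrite mulf_eq0 (negbTE n3) /= => /eqP kk.
have h2 := congr1 (map_poly (intr : int -> 'F_3)) kk.
rewrite rmorph0 !rmorphB /= in h2.
have hAT : map_poly (intr : int -> 'F_3) A = map_poly (intr : int -> 'F_3) T.
  apply/eqP; rewrite -subr_eq0; apply/eqP.
  rewrite -[RHS]h2 rmorphM /= rmorph_nat.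
  have z3 : (3%:R : {poly 'F_3}) = 0.
    by rewrite -(rmorph_nat (@polyC 'F_3)) three0.
  by rewrite z3 mul0r subr0.
rewrite map_Tc in hAT.
have d2 := step (c := c2) _ _ (esym hAT).
move=> j /andP [j0 jn].
have : (3 %| c2 j)%Z.
  apply: d2 jn.
  - by move=> i oi; rewrite /c2 hodd.
  - move=> i hi; case: (i =P 0%N) => [->|/eqP i0]; first exact: c20.
    by rewrite /c2 hlow // lt0n i0.
move=> h; rewrite (eb2 _ jn) (negbTE (lt0n_neq0 j0)) add0r.
have -> : (9 : int) = 3 * 3 by []. 
by rewrite dvdz_mul.
Qed.

Lemma cube (F : finFieldType) (a : F) : #|F| = 4%N -> a * a ^+ 2 = (a != 0)%:R.
Proof.
move=> F4; case: (a =P 0) => [->|/eqP a0]; first by rewrite mul0r.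
have h : a * (a ^+ 3 - 1) = 0.
  by rewrite mulrBr mulr1 -exprS (frob4 F4) subrr.
move/eqP: h; rewrite mulf_eq0 (negbTE a0) /= subr_eq0 => /eqP h.
by rewrite -exprS h.
Qed.

Lemma absz_natr (w : nat) : absz (w%:R : int) = w.
Proof. by rewrite natz. Qed.

Lemma sq_eq (c N : nat) : (c * c = 4 ^ N)%N -> c = (2 ^ N)%N.
Proof.
move=> h; have : (c ^ 2 == (2 ^ N) ^ 2)%N.
  by rewrite -expnM mulnC expnM -[(2 ^ 2)%N]/4%N -h mulnn.
by rewrite eqn_exp2r // => /eqP.
Qed.

Lemma cor_aux (F : finFieldType) (m : nat) (D : {vspace 'rV[F]_(6 * m)}) :
  #|F| = 4%N -> (0 < m)%N -> herm_self_dual D -> extremal D ->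
  forall i : nat, (m + 1 <= i <= 3 * m)%N -> (9 %| wdist D (2 * i))%N.
Proof.
move=> F4 m0 hsd [_ hext] i /andP [hi1 hi2].
pose b j : int := (wdist D j)%:R.
have wt0 (x : 'rV[F]_(6 * m)) : wt x = 0%N -> x = 0.
  rewrite /wt => /eqP; rewrite cards_eq0 => /eqP h; apply/rowP => k.
  rewrite mxE; apply/eqP; apply/negPn/negP => hk.
  have : k \in [set k | x 0 k != 0] by rewrite inE.
  by rewrite h inE.
have wt00 : wt (0 : 'rV[F]_(6 * m)) = 0%N.
  by apply/eqP; rewrite cards_eq0; apply/eqP/setP => k; rewrite !inE mxE eqxx.
have b0 : b 0%N = 1.
  rewrite /b /wdist (_ : [set x | _] = [set 0]) ?cards1 //.
  apply/setP => x; rewrite !inE; apply/andP/eqP => [[_ /eqP /wt0] // | ->].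
  by rewrite mem0v wt00.
have hlow j : (0 < j < 2 * m + 2)%N -> b j = 0.
  move=> /andP [j0 jk]; rewrite /b /wdist; apply/eqP; rewrite pnatr_eq0 cards_eq0.
  apply/eqP/setP => x; rewrite !inE; apply/negP => /andP [xD /eqP wj].
  have x0 : x != 0 by apply/eqP => x0; move: wj; rewrite x0 wt00 => wj; rewrite -wj in j0.
  have := hext x xD x0; rewrite wj mulKn //; lia.
have char2 : (2 \in [pchar F])%N by apply: (@card_finPcharP _ 2 2).
have hodd j : odd j -> b j = 0.
  move=> oj; rewrite /b /wdist; apply/eqP; rewrite pnatr_eq0 cards_eq0.
  apply/eqP/setP => x; rewrite !inE; apply/negP => /andP [xD /eqP wj].
  have h := (hsd x).1 xD x xD.
  have : herm x x = (wt x)%:R.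
    rewrite /herm /wt -sum1_card natr_sum [RHS]big_mkcond /=; apply: eq_bigr => k _.
    by rewrite (cube _ F4) inE; case: (x 0 k != 0).
  rewrite h => /esym/eqP; rewrite -(dvdn_pcharf char2) wj dvdn2 oj //.
pose d : int := (#|D|)%:R.
have hmw : d *: Pc (6 * m) b = Tc (6 * m) b.
  have := macw F4 hsd.
  rewrite (sum_wt D (fun j => P1 ^+ (6 * m - j) * P2 ^+ j)).
  rewrite (sum_wt D (fun j => 'X^j)) => h.
  rewrite /Tc /Pc poly_def.
  have e1 : \sum_(j < (6 * m).+1) b j *: (P1 ^+ (6 * m - j) * P2 ^+ j)
     = \sum_(j < (6 * m).+1) (wdist D j)%:R * (P1 ^+ (6 * m - j) * P2 ^+ j).
    by apply: eq_bigr => j _; rewrite /b /= scaler_nat mulr_natl.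
  rewrite e1 h /d scaler_nat mulr_natl; congr (_ *+ _).
  by apply: eq_bigr => j _; rewrite /b /= scaler_nat mulr_natl.
have hsum : \sum_(j < (6 * m).+1) b j = d.
  have := sum_wt D (fun _ => (1 : int)); rewrite sumr_const => h.
  by rewrite /d -[LHS]mulr1n h; apply: eq_bigr => j _; rewrite mulr1.
have hd : d = 2 ^+ (6 * m).
  have := congr1 (fun p => p.[1]) hmw; rewrite /= hornerZ.
  rewrite /Pc poly_def horner_sum.
  under eq_bigr do rewrite hornerZ hornerXn expr1n mulr1.
  rewrite hsum /Tc horner_sum big_ord_recl /= big1; last first.
    move=> j _; rewrite hornerZ hornerM !horner_exp /P2 !hornerE subrr.
    by rewrite expr0n /= mulr0.
  rewrite addr0 hornerZ hornerM !horner_exp /P1 /P2 !hornerE b0 /= mul1r subn0 expr0 mulr1.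
  have -> : (1 + 1 + 1 + 1 : int) = 4%:R by [].
  have e4 : (4 : int) ^+ (6 * m) = (4 ^ (6 * m))%:R by rewrite natrX.
  rewrite /d -natrM e4 => /eqP; rewrite eqr_nat => /eqP h.
  by rewrite (sq_eq h) natrX.
have hj : (0 < 2 * i <= 6 * m)%N by apply/andP; split; lia.
have := core b0 hlow hodd hd hmw hj.
rewrite /b dvdzE => h; rewrite -(absz_natr (wdist D (2 * i))); exact: h.
Qed.

Local Close Scope ring_scope.
Unset Implicit Arguments.

Theorem corollary3p6 (F : finFieldType) (m : nat) (D : {vspace 'rV[F]_(6 * m)}) :
  #|F| = 4 -> (0 < m)%N -> herm_self_dual D -> extremal D ->
  forall i : nat, (m + 1 <= i <= 3 * m)%N -> (9 %| wdist D (2 * i))%N.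
Proof. exact: cor_aux. Qed.
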